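(* Let $G=(V,E)$ be a finite block graph. If $G$ is identifiable (no distinct vertices $u,v$ with $N[u]=N[v]$), then $\gamma^{LD}(G)\leq n_Q(G)$; otherwise $\gamma^{LD}(G)\leq |V|-1$. Here $n_Q(G)$ is the number of maximal cliques of $G$.
   Context: A block graph is a graph in which every maximal 2-connected subgraph (block) is a clique. For a vertex $u$, $N(u)$ is its open neighborhood and $N[u]=N(u)\cup\{u\}$ its closed neighborhood. A set $C\subseteq V$ is a locating-dominating code (LD-code) if $N[u]\cap C\neq\emptyset$ for every vertex $u$ and $N(u)\cap C\neq N(v)\cap C$ for all distinct $u,v\in V\setminus C$. $\gamma^{LD}(G)$ is the minimum cardinality of an LD-code of $G$. *)

(* Defs.v *)
From mathcomp Require Import all_boot all_order.
Set Implicit Arguments. Unset Strict Implicit. Unset Printing Implicit Defensive.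

Section Graphs.
Variable T : finType.
Variable e : rel T.

Definition simple_graph : Prop := symmetric e /\ irreflexive e.

Definition nbhd (u : T) : {set T} := [set v | e u v].
Definition cnbhd (u : T) : {set T} := u |: nbhd u.

Definition connected_in (S : {set T}) : bool :=
  [forall x in S, forall y in S,
     connect [rel a b | [&& e a b, a \in S & b \in S]] x y].

Definition two_connected (S : {set T}) : bool :=
  [&& 2 < #|S|, connected_in S & [forall x in S, connected_in (S :\ x)]].

(* a block of order >= 3: a maximal 2-connected vertex set *)
Definition big_block (S : {set T}) : bool :=
  two_connected S && [forall S' : {set T}, (S \proper S') ==> ~~ two_connected S'].

Definition is_clique (S : {set T}) : bool :=
  [forall x in S, forall y in S, (x != y) ==> e x y].

(* block graph: every maximal 2-connected subgraph is a clique
   (blocks that are bridges or isolated vertices are trivially cliques) *)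
Definition block_graph : Prop := forall S : {set T}, big_block S -> is_clique S.

Definition maximal_clique (S : {set T}) : bool :=
  [&& S != set0, is_clique S &
      [forall S' : {set T}, (S \proper S') ==> ~~ is_clique S']].

Definition nQ : nat := #|[set S : {set T} | maximal_clique S]|.

Definition identifiable : Prop :=
  forall u v : T, u != v -> cnbhd u != cnbhd v.

Definition LD_code (C : {set T}) : bool :=
  [forall u, cnbhd u :&: C != set0] &&
  [forall u in ~: C, forall v in ~: C, (u != v) ==> (nbhd u :&: C != nbhd v :&: C)].

(* gamma^LD(G): minimum size of an LD-code. V itself is always an LD-code,
   so the default value #|T| of the iterated minimum is harmless. *)
Definition gammaLD : nat :=
  \big[minn/#|T|]_(C : {set T} | LD_code C) #|C|.
End Graphs.

(* Main.v *)
Require Import Defs.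
From mathcomp Require Import all_boot all_order.
Set Implicit Arguments. Unset Strict Implicit. Unset Printing Implicit Defensive.

Lemma max_ext (T : finType) (P : pred {set T}) (S : {set T}) :
  P S -> exists S' : {set T}, [/\ S \subset S', P S' &
     forall S'' : {set T}, S' \proper S'' -> ~~ P S''].
Proof.
move=> PS.
have H0 : (S \subset S) && P S by rewrite subxx PS.
case: (@arg_maxnP _ S (fun X : {set T} => (S \subset X) && P X) (fun X : {set T} => #|X|) H0) => S' /andP [sS PS'] Smax.
exists S'; split=> // S'' pr; apply/negP => PS''.
have := Smax S''; rewrite (subset_trans sS (proper_sub pr)) PS'' => /(_ isT) /=.
by rewrite leqNgt (proper_card pr).
Qed.

Lemma hub_conn (T : finType) (e : rel T) (S : {set T}) (h : T) :
  symmetric e -> h \in S -> (forall z, z \in S -> z != h -> e h z) ->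
  connected_in e S.
Proof.
move=> sym hS H; apply/forallP => x; apply/implyP => xS;
  apply/forallP => y; apply/implyP => yS.
set r := (X in connect X x y).
apply: (@connect_trans _ r h).
  case: (eqVneq x h) => [->|xh]; first exact: connect0.
  by apply: connect1; rewrite /r /= sym H // xS hS.
case: (eqVneq y h) => [->|yh]; first exact: connect0.
by apply: connect1; rewrite /r /= H // yS hS.
Qed.

Lemma diamond (T : finType) (e : rel T) (a b p q : T) :
  simple_graph e -> block_graph e ->
  a != b -> a != p -> a != q -> b != p -> b != q -> p != q ->
  e a p -> e a q -> e b p -> e b q -> e p q -> e a b.
Proof.
move=> [sym irr] bg ab ap aq bp bq pq eap eaq ebp ebq epq.
set S := a |: (b |: (p |: [set q])).
have tc : two_connected e S.
  apply/and3P; split.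
  - rewrite /S !cardsU1 cards1 !inE.
    by rewrite (negbTE ab) (negbTE ap) (negbTE aq) (negbTE bp) (negbTE bq) (negbTE pq).
  - apply: (@hub_conn _ _ _ p) => //; first by rewrite !inE eqxx !orbT.
    move=> z; rewrite !inE => /or4P [] /eqP -> ne;
      first [by [] | by rewrite sym | by rewrite eqxx in ne].
  - apply/forallP => x; apply/implyP; rewrite !inE => /or4P [] /eqP ->.
    + apply: (@hub_conn _ _ _ p) => //; first by rewrite !inE eqxx !orbT eq_sym ap.
      move=> z; rewrite !inE => /andP [za] /or4P [] /eqP -> ne;
        first [by [] | by rewrite sym | by rewrite eqxx in ne | by rewrite eqxx in za].
    + apply: (@hub_conn _ _ _ p) => //; first by rewrite !inE eqxx !orbT eq_sym bp.
      move=> z; rewrite !inE => /andP [za] /or4P [] /eqP -> ne;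
        first [by [] | by rewrite sym | by rewrite eqxx in ne | by rewrite eqxx in za].
    + apply: (@hub_conn _ _ _ q) => //; first by rewrite !inE eqxx !orbT eq_sym pq.
      move=> z; rewrite !inE => /andP [za] /or4P [] /eqP -> ne;
        first [by [] | by rewrite sym | by rewrite eqxx in ne | by rewrite eqxx in za].
    + apply: (@hub_conn _ _ _ p) => //; first by rewrite !inE eqxx !orbT pq.
      move=> z; rewrite !inE => /andP [za] /or4P [] /eqP -> ne;
        first [by [] | by rewrite sym | by rewrite eqxx in ne | by rewrite eqxx in za].
have [S' [sS tS' Smax]] := max_ext tc.
have cl : is_clique e S' by apply: bg; rewrite /big_block tS'; apply/forallP => X; apply/implyP; exact: Smax.
have aS : a \in S' by apply: (subsetP sS); rewrite !inE eqxx.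
have bS : b \in S' by apply: (subsetP sS); rewrite !inE eqxx !orbT.
by move/forallP: cl => /(_ a); rewrite aS => /forallP /(_ b); rewrite bS ab.
Qed.

Lemma cliqueP (T : finType) (e : rel T) (Q : {set T}) x y :
  is_clique e Q -> x \in Q -> y \in Q -> x != y -> e x y.
Proof.
move=> /forallP /(_ x) /implyP H xQ yQ xy.
by have := H xQ => /forallP /(_ y) /implyP /(_ yQ) /implyP /(_ xy).
Qed.

Lemma ext_clique (T : finType) (e : rel T) (K : {set T}) :
  K != set0 -> is_clique e K -> exists Q, maximal_clique e Q && (K \subset Q).
Proof.
move=> K0 cK; have [Q [sKQ cQ Qmax]] := max_ext cK.
exists Q; rewrite sKQ andbT /maximal_clique cQ /=.
apply/andP; split.
  apply: contraNneq K0 => Q0; by rewrite -subset0 -Q0.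
by apply/forallP => X; apply/implyP; exact: Qmax.
Qed.

Lemma clique1 (T : finType) (e : rel T) (u : T) : is_clique e [set u].
Proof.
apply/forallP => x; apply/implyP; rewrite inE => /eqP ->.
apply/forallP => y; apply/implyP; rewrite inE => /eqP ->; by rewrite eqxx.
Qed.

Lemma clique2 (T : finType) (e : rel T) (u v : T) :
  symmetric e -> e u v -> is_clique e [set u; v].
Proof.
move=> sym euv; apply/forallP => x; apply/implyP; rewrite !inE => /orP [] /eqP ->;
apply/forallP => y; apply/implyP; rewrite !inE => /orP [] /eqP ->;
  by rewrite ?eqxx ?euv ?implybT // sym euv implybT.
Qed.

Lemma gamma_le (T : finType) (e : rel T) (C : {set T}) :
  LD_code e C -> gammaLD e <= #|C|.
Proof.
move=> H; rewrite /gammaLD.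
have : C \in index_enum (finset_set_of__canonical__fintype_Finite T) by rewrite mem_index_enum.
elim: (index_enum _) => [//|X r IH]; rewrite inE big_cons => /orP [/eqP <-|Cr].
  by rewrite H geq_minl.
case: (LD_code e X) => /=; last exact: IH.
by apply: leq_trans (geq_minr _ _) (IH Cr).
Qed.

Lemma LD_setT (T : finType) (e : rel T) : LD_code e [set: T].
Proof.
apply/andP; split.
  apply/forallP => u; apply/set0Pn; exists u; by rewrite !inE eqxx.
apply/forallP => u; apply/implyP; by rewrite !inE.
Qed.

Lemma adj_case (T : finType) (e : rel T) (C : {set T}) u v x :
  simple_graph e -> block_graph e ->
  (forall Q, maximal_clique e Q -> exists2 w, w \in Q & w \in C) ->
  u \notin C -> v \notin C -> (forall z, z \in C -> e u z = e v z) ->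
  e u v -> x \in cnbhd e u -> x \notin cnbhd e v -> False.
Proof.
move=> sg bg HC uC vC HN euv; have [sym irr] := sg.
rewrite !inE negb_or => /orP [/eqP ->|eux] /andP [xv nevx].
  by rewrite sym euv in nevx.
have xu : x != u by apply: contraTneq eux => ->; rewrite irr.
have K0 : [set u; x] != set0 by apply/set0Pn; exists u; rewrite !inE eqxx.
have [Q /andP [mQ sQ]] := ext_clique K0 (clique2 sym eux).
have cQ : is_clique e Q by case/and3P: mQ.
have uQ : u \in Q by apply: (subsetP sQ); rewrite !inE eqxx.
have xQ : x \in Q by apply: (subsetP sQ); rewrite !inE eqxx orbT.
have [w wQ wC] := HC Q mQ.
have wu : w != u by apply: contraNneq uC => <-.
have wv : w != v by apply: contraNneq vC => <-.
have euw : e u w by apply: cliqueP cQ uQ wQ _; rewrite eq_sym.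
have evw : e v w by rewrite -HN.
have wx : w != x by apply: contraNneq nevx => <-.
have ewx : e w x by apply: cliqueP cQ wQ xQ wx.
have vu : v != u by apply: contraTneq euv => ->; rewrite irr.
suff : e v x by rewrite (negbTE nevx).
apply: (@diamond _ e v x u w sg bg) => //.
- by rewrite eq_sym.
- by rewrite eq_sym.
- by rewrite eq_sym.
- by rewrite eq_sym.
- by rewrite sym.
- by rewrite sym.
- by rewrite sym.
Qed.

Lemma ident_part (T : finType) (e : rel T) :
  simple_graph e -> block_graph e -> identifiable e -> gammaLD e <= nQ e.
Proof.
move=> sg bg idf; have [sym irr] := sg.
case: (pickP (fun _ : T => true)) => [x0 _|T0]; last first.
  apply: leq_trans (gamma_le (LD_setT e)) _.
  by rewrite cardsT eq_card0.
set MQ := [set Q : {set T} | maximal_clique e Q].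
pose ok (g : {ffun {set T} -> T}) := [forall Q in MQ, g Q \in Q].
pose img (g : {ffun {set T} -> T}) := [set g Q | Q in MQ].
pose g0 := [ffun Q : {set T} => odflt x0 [pick x in Q]].
have okg0 : ok g0.
  apply/forallP => Q; apply/implyP; rewrite inE => /and3P [Q0 _ _].
  rewrite ffunE; case: pickP => [y yQ //|H].
  by move: Q0; rewrite -subset0; case/subsetPn => z zQ; rewrite H in zQ.
case: (@arg_maxnP _ g0 ok (fun g => #|img g|) okg0) => g okg gmax.
have gQ : forall Q, maximal_clique e Q -> g Q \in Q.
  by move=> Q mQ; move/forallP: okg => /(_ Q) /implyP; apply; rewrite inE.
have gC : forall Q, maximal_clique e Q -> g Q \in img g.
  by move=> Q mQ; apply: imset_f; rewrite inE.
have clQ : forall Q, maximal_clique e Q -> is_clique e Q by move=> Q /and3P [].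
have CLD : LD_code e (img g).
  apply/andP; split.
    apply/forallP => w.
    have K0 : [set w] != set0 by apply/set0Pn; exists w; rewrite inE.
    have [Q /andP [mQ sQ]] := ext_clique K0 (clique1 e w).
    have wQ : w \in Q by apply: (subsetP sQ); rewrite inE.
    apply/set0Pn; exists (g Q); rewrite inE gC // andbT !inE.
    case: (eqVneq (g Q) w) => [->|ne]; first by [].
    by apply/orP; right; apply: cliqueP (clQ _ mQ) wQ (gQ _ mQ) _; rewrite eq_sym.
  apply/forallP => u; apply/implyP; rewrite inE => uC.
  apply/forallP => v; apply/implyP; rewrite inE => vC.
  apply/implyP => uv; apply/negP => /eqP HNs.
  have HN : forall z, z \in img g -> e u z = e v z.
    move=> z zC; have := congr1 (fun A : {set T} => z \in A) HNs.
    by rewrite /= !inE zC !andbT.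
  have HC : forall Q, maximal_clique e Q -> exists2 w, w \in Q & w \in img g.
    by move=> Q mQ; exists (g Q); [apply: gQ | apply: gC].
  case euv : (e u v).
    have [x hx] : exists x, (x \in cnbhd e u) != (x \in cnbhd e v).
      apply/existsP; apply: contraR (idf _ _ uv) => /existsPn H.
      apply/eqP/setP => x; apply/eqP; by have := H x; rewrite negbK.
    case xu : (x \in cnbhd e u) in hx.
      by apply: (adj_case sg bg HC uC vC HN euv xu); move: hx; case: (x \in cnbhd e v).
    apply: (adj_case sg bg HC vC uC _ _ (_ : x \in cnbhd e v)); rewrite ?xu //.
    - by move=> z zC; rewrite HN.
    - by rewrite sym.
    - by move: hx; case: (x \in cnbhd e v).
  have K0 : [set u] != set0 by apply/set0Pn; exists u; rewrite inE.
  have [Q /andP [mQ sQ]] := ext_clique K0 (clique1 e u).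
  have uQ : u \in Q by apply: (subsetP sQ); rewrite inE.
  set w := g Q.
  have wQ : w \in Q := gQ _ mQ.
  have wC : w \in img g := gC _ mQ.
  have wu : w != u by apply: contraNneq uC => <-.
  have wv : w != v by apply: contraNneq vC => <-.
  have euw : e u w by apply: cliqueP (clQ _ mQ) uQ wQ _; rewrite eq_sym.
  have evw : e v w by rewrite -HN.
  have K1 : [set w; v] != set0 by apply/set0Pn; exists w; rewrite !inE eqxx.
  have ewv : e w v by rewrite sym.
  have [R /andP [mR sR]] := ext_clique K1 (clique2 sym ewv).
  have wR : w \in R by apply: (subsetP sR); rewrite !inE eqxx.
  have vR : v \in R by apply: (subsetP sR); rewrite !inE eqxx orbT.
  set w' := g R.
  have w'R : w' \in R := gQ _ mR.
  have w'C : w' \in img g := gC _ mR.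
  have w'v : w' != v by apply: contraNneq vC => <-.
  have evw' : e v w' by apply: cliqueP (clQ _ mR) vR w'R _; rewrite eq_sym.
  have euw' : e u w' by rewrite HN.
  case: (eqVneq w' w) => [w'w | w'w].
    have QR : R != Q.
      apply/eqP => RQ; rewrite RQ in vR.
      by rewrite (cliqueP (clQ _ mQ) uQ vR uv) in euv.
    pose g' := [ffun P => if P == Q then u else g P].
    have okg' : ok g'.
      apply/forallP => P; apply/implyP => PM; rewrite ffunE.
      case: eqP => [->//|_]; apply: gQ; by rewrite inE in PM.
    have sub : u |: img g \subset img g'.
      apply/subsetP => z; rewrite in_setU1 => /orP [/eqP -> | /imsetP [P PM ->]].
        by apply/imsetP; exists Q; rewrite ?inE // ffunE eqxx.
      case: (eqVneq P Q) => [PQ | PQ].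
        apply/imsetP; exists R; first by rewrite inE.
        by rewrite ffunE (negbTE QR) PQ -/w -w'w.
      by apply/imsetP; exists P; rewrite // ffunE (negbTE PQ).
    have := subset_leq_card sub; rewrite cardsU1 uC /=.
    by move=> H1; have := leq_trans H1 (gmax g' okg'); rewrite add1n ltnn.
  have uw' : u != w' by apply: contraTneq euw' => ->; rewrite irr.
  suff : e u v by rewrite euv.
  apply: (@diamond _ e u v w w' sg bg) => //.
  - by rewrite eq_sym.
  - by rewrite eq_sym.
  - by rewrite eq_sym.
  - by rewrite eq_sym.
  - by apply: cliqueP (clQ _ mR) wR w'R _; rewrite eq_sym.
apply: leq_trans (gamma_le CLD) _.
by rewrite /nQ leq_imset_card.
Qed.

Theorem theorem2p3 (T : finType) (e : rel T) :
  simple_graph e -> block_graph e ->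
  (identifiable e -> gammaLD e <= nQ e) /\
  (~ identifiable e -> gammaLD e <= #|T| - 1).
Proof.
move=> sg bg; split; first exact: ident_part.
move=> nid; have [sym irr] := sg.
have [u [v [uv cuv]]] : exists u v, u != v /\ cnbhd e u = cnbhd e v.
  case: (boolP [exists u, exists v, (u != v) && (cnbhd e u == cnbhd e v)]).
    by case/existsP => u /existsP [v /andP [uv /eqP c]]; exists u, v.
  move/existsPn => H; exfalso; apply: nid => u v uv; apply/negP => /eqP c.
  by move/existsPn: (H u) => /(_ v); rewrite uv c eqxx.
have euv : e u v.
  have : v \in cnbhd e u by rewrite cuv !inE eqxx.
  by rewrite !inE eq_sym (negbTE uv).
have LD : LD_code e [set~ u].
  apply/andP; split.
    apply/forallP => w; apply/set0Pn.
    case: (eqVneq w u) => [->|wu].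
      by exists v; rewrite !inE euv orbT eq_sym uv.
    by exists w; rewrite !inE eqxx wu.
  apply/forallP => a; apply/implyP; rewrite !inE negbK => /eqP ->.
  apply/forallP => b; apply/implyP; rewrite !inE negbK => /eqP ->.
  by rewrite eqxx.
apply: leq_trans (gamma_le LD) _.
by rewrite cardsC1 subn1.
Qed.
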